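(* Let $V\in{}_B\mathrm{Mod}^A$ and $W\in{}_A\mathrm{Mod}^C$. Then the DK-modules ${}_V\mathrm{Ind}(W)$ and $\mathrm{Ind}^W(V)$ (both with underlying space $V\odot W$, as described in the context) are isomorphic in ${}_B\mathrm{Mod}^C$.
   Context: $A$ is a CQG Hopf $*$-algebra: a complex Hopf algebra $(A,\Delta_A,\varepsilon_A,S_A)$ with an anti-linear involution making it a $*$-algebra with $\Delta_A$ a $*$-homomorphism, admitting a state $\Phi_A$ with $(\Phi_A\otimes\mathrm{id})\Delta_A(a)=\Phi_A(a)1=(\mathrm{id}\otimes\Phi_A)\Delta_A(a)$. $B\subseteq A$ is a unital right coideal $*$-subalgebra ($\Delta_A(B)\subseteq B\odot A$). Let $B_+=B\cap\ker\varepsilon_A$, $C=A/AB_+$ with quotient map $\pi_C$; $C$ is a coalgebra with comultiplication induced by $\Delta_A$ and a left $A$-module via $a\cdot\pi_C(a')=\pi_C(aa')$. Sweedler notation is used for coproducts and coactions ($\odot$ is the algebraic tensor product). For $(X,Y)\in\{(B,A),(A,C),(B,C)\}$, ${}_X\mathrm{Mod}^Y$ is the category of left $X$-modules $V$ with a right $Y$-comodule structure $v\mapsto v_{(0)}\otimes v_{(1)}$ such that $(xv)_{(0)}\otimes(xv)_{(1)}=x_{(1)}v_{(0)}\otimes x_{(2)}v_{(1)}$ (with $x_{(1)}\otimes x_{(2)}=\Delta_A(x)$ and $x_{(2)}v_{(1)}$ the product in $A$, resp. the $A$-action on $C$); morphisms are module and comodule maps. ${}_V\mathrm{Ind}(W)$: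 $V\odot W$ with $b(v\otimes w)=bv\otimes w$ and coaction $v\otimes w\mapsto v_{(0)}\otimes w_{(0)}\otimes v_{(1)}w_{(1)}$. $\mathrm{Ind}^W(V)$: $V\odot W$ with $b(v\otimes w)=b_{(1)}v\otimes b_{(2)}w$ and coaction $v\otimes w\mapsto v\otimes w_{(0)}\otimes w_{(1)}$. (Both are objects of ${}_B\mathrm{Mod}^C$.) *)

(* Defs.v *)
(* Elements of algebraic tensor products are represented
   "in Sweedler style" as finite lists of pairs (resp. triples), two lists
   being identified (teq2 / teq3) iff every bilinear (resp. trilinear) map
   into every K-vector space takes the same value on them; this is exactly
   equality of the corresponding elements of the algebraic tensor product. *)
From HB Require Import structures.
From mathcomp Require Import all_boot all_order all_algebra.
From mathcomp Require Import complex reals.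
Set Implicit Arguments. Unset Strict Implicit. Unset Printing Implicit Defensive.
Import Order.TTheory GRing.Theory Num.Theory.
Local Open Scope ring_scope.

Section Tensors.
Variable K : numClosedFieldType.

Definition bilin (U V X : lmodType K) (f : U -> V -> X) : Prop :=
  (forall (k : K) u u' v, f (k *: u + u') v = k *: f u v + f u' v) /\
  (forall (k : K) u v v', f u (k *: v + v') = k *: f u v + f u v').

Definition trilin (U V W X : lmodType K) (f : U -> V -> W -> X) : Prop :=
  (forall (k : K) u u' v w, f (k *: u + u') v w = k *: f u v w + f u' v w) /\
  (forall (k : K) u v v' w, f u (k *: v + v') w = k *: f u v w + f u v' w) /\
  (forall (k : K) u v w w', f u v (k *: w + w') = k *: f u v w + f u v w').

Definition teq2 (U V : lmodType K) (s t : seq (U * V)) : Prop :=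
  forall (X : lmodType K) (f : U -> V -> X), bilin f ->
    \sum_(p <- s) f p.1 p.2 = \sum_(p <- t) f p.1 p.2.

Definition teq3 (U V W : lmodType K) (s t : seq (U * V * W)) : Prop :=
  forall (X : lmodType K) (f : U -> V -> W -> X), trilin f ->
    \sum_(p <- s) f p.1.1 p.1.2 p.2 = \sum_(p <- t) f p.1.1 p.1.2 p.2.

Definition tscale (U V : lmodType K) (k : K) (s : seq (U * V)) : seq (U * V) :=
  [seq (k *: p.1, p.2) | p <- s].

Record is_CQG_Hopf_star (A : algType K) (Delta : A -> seq (A * A))
    (eps : A -> K) (S : A -> A) (st : A -> A) (Phi : A -> K) : Prop := {
  cop_lin : forall (k : K) x y,
    teq2 (Delta (k *: x + y)) (tscale k (Delta x) ++ Delta y);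
  cop_mul : forall x y,
    teq2 (Delta (x * y)) [seq (p.1 * q.1, p.2 * q.2) | p <- Delta x, q <- Delta y];
  cop_one : teq2 (Delta 1) [:: (1, 1)];
  cop_coass : forall a,
    teq3 [seq (p.1, q.1, q.2) | p <- Delta a, q <- Delta p.2]
         [seq (q.1, q.2, p.2) | p <- Delta a, q <- Delta p.1];
  eps_lin : forall (k : K) x y, eps (k *: x + y) = k * eps x + eps y;
  eps_mul : forall x y, eps (x * y) = eps x * eps y;
  eps_one : eps 1 = 1;
  eps_counit_l : forall a, \sum_(p <- Delta a) eps p.1 *: p.2 = a;
  eps_counit_r : forall a, \sum_(p <- Delta a) eps p.2 *: p.1 = a;
  S_lin : forall (k : K) x y, S (k *: x + y) = k *: S x + S y;
  S_antipode_l : forall a, \sum_(p <- Delta a) S p.1 * p.2 = eps a *: 1;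
  S_antipode_r : forall a, \sum_(p <- Delta a) p.1 * S p.2 = eps a *: 1;
  st_antilin : forall (k : K) x y, st (k *: x + y) = k^* *: st x + st y;
  st_mul : forall x y, st (x * y) = st y * st x;
  st_invol : forall x, st (st x) = x;
  cop_st : forall a, teq2 (Delta (st a)) [seq (st p.1, st p.2) | p <- Delta a];
  Phi_lin : forall (k : K) x y, Phi (k *: x + y) = k * Phi x + Phi y;
  Phi_one : Phi 1 = 1;
  Phi_pos : forall a, 0 <= Phi (st a * a);
  Phi_inv_l : forall a, \sum_(p <- Delta a) Phi p.1 *: p.2 = Phi a *: 1;
  Phi_inv_r : forall a, \sum_(p <- Delta a) Phi p.2 *: p.1 = Phi a *: 1
}.

Record is_right_coideal_star_subalg (A : algType K) (Delta : A -> seq (A * A))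
    (st : A -> A) (B : A -> Prop) : Prop := {
  B_one : B 1;
  B_lin : forall (k : K) x y, B x -> B y -> B (k *: x + y);
  B_mul : forall x y, B x -> B y -> B (x * y);
  B_st : forall x, B x -> B (st x);
  B_coideal : forall b, B b ->
    exists s : seq (A * A), (forall p, p \in s -> B p.1) /\ teq2 (Delta b) s
}.

(* pi : A -> C is the quotient map A -> A / A B_+ (B_+ = B \cap ker eps),
   DeltaC, epsC are the induced coalgebra structure on C and actC the
   induced left A-action  a . pi(a') = pi(a a'). *)
Record is_quotient_coalg (A : algType K) (Delta : A -> seq (A * A))
    (eps : A -> K) (B : A -> Prop) (C : lmodType K) (pi : A -> C)
    (DeltaC : C -> seq (C * C)) (epsC : C -> K) (actC : A -> C -> C) : Prop := {
  pi_lin : forall (k : K) x y, pi (k *: x + y) = k *: pi x + pi y;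
  pi_surj : forall c, exists a, pi a = c;
  pi_ker : forall x, pi x = 0 <->
    exists s : seq (A * A), (forall p, p \in s -> B p.2 /\ eps p.2 = 0) /\
                            x = \sum_(p <- s) p.1 * p.2;
  copC_def : forall a, teq2 (DeltaC (pi a)) [seq (pi p.1, pi p.2) | p <- Delta a];
  epsC_def : forall a, epsC (pi a) = eps a;
  actC_def : forall a a', actC a (pi a') = pi (a * a')
}.

(* V is an object of  _B Mod^A  (actV is only relevant on elements of B) *)
Record is_BModA (A : algType K) (Delta : A -> seq (A * A)) (eps : A -> K)
    (B : A -> Prop) (V : lmodType K) (actV : A -> V -> V)
    (rhoV : V -> seq (V * A)) : Prop := {
  actV_linr : forall b (k : K) v v', B b -> actV b (k *: v + v') = k *: actV b v + actV b v';
  actV_linl : forall b b' (k : K) v, B b -> B b' ->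
    actV (k *: b + b') v = k *: actV b v + actV b' v;
  actV_one : forall v, actV 1 v = v;
  actV_mul : forall b b' v, B b -> B b' -> actV (b * b') v = actV b (actV b' v);
  rhoV_lin : forall (k : K) v v', teq2 (rhoV (k *: v + v')) (tscale k (rhoV v) ++ rhoV v');
  rhoV_coass : forall v,
    teq3 [seq (p.1, q.1, q.2) | p <- rhoV v, q <- Delta p.2]
         [seq (q.1, q.2, p.2) | p <- rhoV v, q <- rhoV p.1];
  rhoV_counit : forall v, \sum_(p <- rhoV v) eps p.2 *: p.1 = v;
  rhoV_compat : forall b (s : seq (A * A)), B b -> (forall p, p \in s -> B p.1) ->
    teq2 (Delta b) s -> forall v,
    teq2 (rhoV (actV b v)) [seq (actV q.1 p.1, q.2 * p.2) | q <- s, p <- rhoV v]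
}.

Record is_AModC (A : algType K) (Delta : A -> seq (A * A)) (C : lmodType K)
    (DeltaC : C -> seq (C * C)) (epsC : C -> K) (actC : A -> C -> C)
    (W : lmodType K) (actW : A -> W -> W) (rhoW : W -> seq (W * C)) : Prop := {
  actW_linr : forall a (k : K) w w', actW a (k *: w + w') = k *: actW a w + actW a w';
  actW_linl : forall a a' (k : K) w, actW (k *: a + a') w = k *: actW a w + actW a' w;
  actW_one : forall w, actW 1 w = w;
  actW_mul : forall a a' w, actW (a * a') w = actW a (actW a' w);
  rhoW_lin : forall (k : K) w w', teq2 (rhoW (k *: w + w')) (tscale k (rhoW w) ++ rhoW w');
  rhoW_coass : forall w,
    teq3 [seq (p.1, q.1, q.2) | p <- rhoW w, q <- DeltaC p.2]
         [seq (q.1, q.2, p.2) | p <- rhoW w, q <- rhoW p.1];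
  rhoW_counit : forall w, \sum_(p <- rhoW w) epsC p.2 *: p.1 = w;
  rhoW_compat : forall a w,
    teq2 (rhoW (actW a w)) [seq (actW q.1 p.1, actC q.2 p.2) | q <- Delta a, p <- rhoW w]
}.

Section Ind.
Variables (A : algType K) (C V W : lmodType K).
Variables (actV : A -> V -> V) (rhoV : V -> seq (V * A)).
Variables (actW : A -> W -> W) (rhoW : W -> seq (W * C)) (actC : A -> C -> C).

Definition indV_act (b : A) (x : seq (V * W)) : seq (V * W) :=
  [seq (actV b p.1, p.2) | p <- x].
Definition indV_coact (x : seq (V * W)) : seq (V * W * C) :=
  flatten [seq [seq (q.1, r.1, actC q.2 r.2) | q <- rhoV p.1, r <- rhoW p.2] | p <- x].

(* Ind^W(V) : b (v (x) w) = b_(1) v (x) b_(2) w, where sb is any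
   representation of Delta(b) in B (.) A;
   coaction v (x) w |-> v (x) w_(0) (x) w_(1) *)
Definition indW_act (sb : seq (A * A)) (x : seq (V * W)) : seq (V * W) :=
  [seq (actV q.1 p.1, actW q.2 p.2) | p <- x, q <- sb].
Definition indW_coact (x : seq (V * W)) : seq (V * W * C) :=
  [seq (p.1, r.1, r.2) | p <- x, r <- rhoW p.2].
End Ind.

Definition tensor_linear (V W : lmodType K) (F : seq (V * W) -> seq (V * W)) : Prop :=
  (forall s t, teq2 s t -> teq2 (F s) (F t)) /\
  (forall (k : K) s t, teq2 (F (tscale k s ++ t)) (tscale k (F s) ++ F t)).

Definition tmap_idC (V W C : lmodType K) (F : seq (V * W) -> seq (V * W))
    (l : seq (V * W * C)) : seq (V * W * C) :=
  [seq (q.1, q.2, t.2) | t <- l, q <- F [:: t.1]].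

Definition Ind_isomorphic (A : algType K) (Delta : A -> seq (A * A))
    (B : A -> Prop) (C V W : lmodType K) (actC : A -> C -> C)
    (actV : A -> V -> V) (rhoV : V -> seq (V * A))
    (actW : A -> W -> W) (rhoW : W -> seq (W * C)) : Prop :=
  exists (F G : seq (V * W) -> seq (V * W)),
    [/\ tensor_linear F, tensor_linear G,
        ((forall x, teq2 (G (F x)) x) /\ (forall x, teq2 (F (G x)) x)),
        (forall b (sb : seq (A * A)), B b -> (forall p, p \in sb -> B p.1) ->
           teq2 (Delta b) sb -> forall x,
           teq2 (F (indV_act actV b x)) (indW_act actV actW sb (F x))) &
        (forall x, teq3 (tmap_idC F (indV_coact rhoV rhoW actC x))
                        (indW_coact rhoW (F x)))].

End Tensors.

(* Main.v *)
Require Import Defs.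
From HB Require Import structures.
From mathcomp Require Import all_boot all_order all_algebra.
From mathcomp Require Import complex reals.
Set Implicit Arguments. Unset Strict Implicit. Unset Printing Implicit Defensive.
Import Order.TTheory GRing.Theory Num.Theory.
Local Open Scope ring_scope.

Section Gen.
Variable K : numClosedFieldType.

Definition lin1 (U X : lmodType K) (h : U -> X) :=
  forall (k : K) u u', h (k *: u + u') = k *: h u + h u'.

Section L.
Variables (U X : lmodType K) (h : U -> X) (hl : lin1 h).
Lemma lin1_0 : h 0 = 0.
Proof.
have := hl 1 0 0; rewrite !scale1r addr0 => /eqP.
by rewrite -{1}[h 0]add0r eq_sym (inj_eq (addIr _)) => /eqP.
Qed.
Lemma lin1_add u u' : h (u + u') = h u + h u'.
Proof. by have := hl 1 u u'; rewrite !scale1r. Qed.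
Lemma lin1_scale k u : h (k *: u) = k *: h u.
Proof. by have := hl k u 0; rewrite !addr0 lin1_0 addr0. Qed.
Lemma lin1_sum (I : Type) (s : seq I) (F : I -> U) :
  h (\sum_(i <- s) F i) = \sum_(i <- s) h (F i).
Proof.
elim: s => [|a s IH]; first by rewrite !big_nil lin1_0.
by rewrite !big_cons lin1_add IH.
Qed.
End L.

Lemma lin1_comp (U Y X : lmodType K) (g : U -> Y) (h : Y -> X) :
  lin1 g -> lin1 h -> lin1 (fun u => h (g u)).
Proof. by move=> hg hh k u u'; rewrite hg hh. Qed.

Lemma lin1_sumf (U X : lmodType K) (I : Type) (s : seq I) (h : I -> U -> X) :
  (forall i, lin1 (h i)) -> lin1 (fun u => \sum_(i <- s) h i u).
Proof.
move=> hh k u u'; rewrite (eq_bigr (fun i => k *: h i u + h i u')) //.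
  by rewrite big_split /= scaler_sumr.
by move=> i _; rewrite hh.
Qed.

Definition tsum (U V X : lmodType K) (f : U -> V -> X) (s : seq (U * V)) :=
  \sum_(p <- s) f p.1 p.2.

Lemma bilin_l (U V X : lmodType K) (f : U -> V -> X) v : bilin f -> lin1 (fun u => f u v).
Proof. by case=> h _ k u u'; rewrite h. Qed.
Lemma bilin_r (U V X : lmodType K) (f : U -> V -> X) u : bilin f -> lin1 (f u).
Proof. by case=> _ h k v v'; rewrite h. Qed.
Lemma bilinP (U V X : lmodType K) (f : U -> V -> X) :
  (forall v, lin1 (fun u => f u v)) -> (forall u, lin1 (f u)) -> bilin f.
Proof. by move=> h1 h2; split=> *; [rewrite h1 | rewrite h2]. Qed.

Lemma tsum_tscale_cat (U V X : lmodType K) (f : U -> V -> X) k s t :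
  bilin f -> tsum f (tscale k s ++ t) = k *: tsum f s + tsum f t.
Proof.
move=> bf; rewrite /tsum big_cat big_map /= scaler_sumr; congr (_ + _).
by apply: eq_bigr => p _; rewrite (lin1_scale (bilin_l _ bf)).
Qed.

Lemma rho_lin1 (U Y X : lmodType K) (rho : U -> seq (U * Y)) (g : U -> Y -> X) :
  (forall k u u', teq2 (rho (k *: u + u')) (tscale k (rho u) ++ rho u')) ->
  bilin g -> lin1 (fun u => tsum g (rho u)).
Proof.
by move=> hr bg k u u'; rewrite /tsum (hr _ _ _ _ _ bg) -/(tsum _ _) tsum_tscale_cat.
Qed.

Definition Mk (U V : lmodType K) (phi : U -> V -> seq (U * V)) (x : seq (U * V)) :=
  [seq q | p <- x, q <- phi p.1 p.2].

Lemma tsum_Mk (U V X : lmodType K) phi (f : U -> V -> X) x :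
  tsum f (Mk phi x) = tsum (fun u v => tsum f (phi u v)) x.
Proof. by rewrite /tsum big_allpairs_dep. Qed.

Lemma tl_Mk (U V : lmodType K) (phi : U -> V -> seq (U * V)) :
  (forall (X : lmodType K) (f : U -> V -> X), bilin f -> bilin (fun u v => tsum f (phi u v))) ->
  tensor_linear (Mk phi).
Proof.
move=> hphi; split.
  move=> s t hst X f bf; have := hst X _ (hphi X f bf).
  by rewrite -!/(tsum _ _) !tsum_Mk.
move=> k s t X f bf; rewrite -!/(tsum _ _) tsum_Mk !tsum_tscale_cat ?tsum_Mk //.
exact: hphi.
Qed.

Lemma trilinP (U V W X : lmodType K) (g : U -> V -> W -> X) :
  (forall v w, lin1 (fun u => g u v w)) -> (forall u w, lin1 (fun v => g u v w)) ->
  (forall u v, lin1 (g u v)) -> trilin g.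
Proof. by move=> h1 h2 h3; split; [|split] => *; [rewrite h1|rewrite h2|rewrite h3]. Qed.
Section BL.
Variables (U V X : lmodType K) (f : U -> V -> X) (bf : bilin f).
Lemma bilinZl k u v : f (k *: u) v = k *: f u v.
Proof. exact: (lin1_scale (bilin_l _ bf)). Qed.
Lemma bilinZr k u v : f u (k *: v) = k *: f u v.
Proof. exact: (lin1_scale (bilin_r _ bf)). Qed.
Lemma bilin_suml (I : Type) (s : seq I) (F : I -> U) v :
  f (\sum_(i <- s) F i) v = \sum_(i <- s) f (F i) v.
Proof. exact: (lin1_sum (bilin_l _ bf)). Qed.
Lemma bilin_sumr (I : Type) (s : seq I) (F : I -> V) u :
  f u (\sum_(i <- s) F i) = \sum_(i <- s) f u (F i).
Proof. exact: (lin1_sum (bilin_r _ bf)). Qed.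
End BL.
Section TL.
Variables (U V W X : lmodType K) (g : U -> V -> W -> X) (tg : trilin g).
Lemma tril1 v w : lin1 (fun u => g u v w).
Proof. by case: tg => h _ k u u'; rewrite h. Qed.
Lemma tril2 u w : lin1 (fun v => g u v w).
Proof. by case: tg => _ [h _] k v v'; rewrite h. Qed.
Lemma tril3 u v : lin1 (g u v).
Proof. by case: tg => _ [_ h] k w w'; rewrite h. Qed.
End TL.
End Gen.

Section Main.
Variables (K : numClosedFieldType) (A : algType K) (Delta : A -> seq (A * A))
  (eps : A -> K) (S st : A -> A) (Phi : A -> K).
Hypothesis hA : is_CQG_Hopf_star Delta eps S st Phi.
Variables (B : A -> Prop) (C : lmodType K) (piC : A -> C) (DeltaC : C -> seq (C * C))
  (epsC : C -> K) (actC : A -> C -> C).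
Hypothesis hC : is_quotient_coalg Delta eps B piC DeltaC epsC actC.
Variables (V : lmodType K) (actV : A -> V -> V) (rhoV : V -> seq (V * A)).
Hypothesis hV : is_BModA Delta eps B actV rhoV.
Variables (W : lmodType K) (actW : A -> W -> W) (rhoW : W -> seq (W * C)).
Hypothesis hW : is_AModC Delta DeltaC epsC actC actW rhoW.

Lemma actW_l w : lin1 (fun a => actW a w).
Proof. by move=> k a a'; exact: (actW_linl hW). Qed.
Lemma actW_r a : lin1 (actW a).
Proof. by move=> k u u'; exact: (actW_linr hW). Qed.
Lemma S_l : lin1 (S : A -> A).
Proof. by move=> k u u'; exact: (S_lin hA). Qed.
Lemma actC_l c : lin1 (fun a => actC a c).
Proof.
move=> k a a'; case: (pi_surj hC c) => a0 <-.
by rewrite !(actC_def hC) mulrDl -scalerAl (pi_lin hC).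
Qed.
Lemma mull_lin (b : A) : lin1 (fun a : A => a * b).
Proof. by move=> k u u'; rewrite mulrDl scalerAl. Qed.
Lemma mulr_lin (b : A) : lin1 (fun a : A => b * a).
Proof. by move=> k u u'; rewrite mulrDr scalerAr. Qed.

Definition phiF (v : V) (w : W) := [seq (q.1, actW q.2 w) | q <- rhoV v].
Definition phiG (v : V) (w : W) := [seq (q.1, actW (S q.2) w) | q <- rhoV v].

Lemma tsum_phiF (X : lmodType K) (f : V -> W -> X) v w :
  tsum f (phiF v w) = \sum_(q <- rhoV v) f q.1 (actW q.2 w).
Proof. by rewrite /tsum big_map. Qed.
Lemma tsum_phiG (X : lmodType K) (f : V -> W -> X) v w :
  tsum f (phiG v w) = \sum_(q <- rhoV v) f q.1 (actW (S q.2) w).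
Proof. by rewrite /tsum big_map. Qed.

Lemma bilin_phiF (X : lmodType K) (f : V -> W -> X) : bilin f -> bilin (fun v w => tsum f (phiF v w)).
Proof.
move=> bf; apply: bilinP.
  move=> w k u u'; rewrite !tsum_phiF.
  have bg : bilin (fun x a => f x (actW a w)).
    apply: bilinP => [a|x]; first exact: bilin_l.
    exact: lin1_comp (actW_l w) (bilin_r _ bf).
  have := rho_lin1 (rhoV_lin hV) bg k u u'; by rewrite /tsum.
move=> v k u u'; rewrite !tsum_phiF.
have := lin1_sumf (rhoV v) (h := fun q w => f q.1 (actW q.2 w)).
apply=> // q; exact: lin1_comp (actW_r _) (bilin_r _ bf).
Qed.

Lemma bilin_phiG (X : lmodType K) (f : V -> W -> X) : bilin f -> bilin (fun v w => tsum f (phiG v w)).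
Proof.
move=> bf; apply: bilinP.
  move=> w k u u'; rewrite !tsum_phiG.
  have bg : bilin (fun x a => f x (actW (S a) w)).
    apply: bilinP => [a|x]; first exact: bilin_l.
    exact: lin1_comp S_l (lin1_comp (actW_l w) (bilin_r _ bf)).
  have := rho_lin1 (rhoV_lin hV) bg k u u'; by rewrite /tsum.
move=> v k u u'; rewrite !tsum_phiG.
have := lin1_sumf (rhoV v) (h := fun q w => f q.1 (actW (S q.2) w)).
apply=> // q; exact: lin1_comp (actW_r _) (bilin_r _ bf).
Qed.

Lemma coassV (X : lmodType K) (g : V -> A -> A -> X) v : trilin g ->
  \sum_(p <- rhoV v) \sum_(q <- rhoV p.1) g q.1 q.2 p.2 =
  \sum_(p <- rhoV v) \sum_(q <- Delta p.2) g p.1 q.1 q.2.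
Proof.
by move=> tg; have := rhoV_coass hV v tg; rewrite !big_allpairs_dep /= => ->.
Qed.
Lemma actWZl k a w : actW (k *: a) w = k *: actW a w.
Proof. exact: (lin1_scale (actW_l w)). Qed.
Lemma actW_suml (I : Type) (s : seq I) (F : I -> A) w :
  actW (\sum_(i <- s) F i) w = \sum_(i <- s) actW (F i) w.
Proof. exact: (lin1_sum (actW_l w)). Qed.

Lemma GF_pt (X : lmodType K) (f : V -> W -> X) (bf : bilin f) v w :
  tsum (fun u v => tsum f (phiG u v)) (phiF v w) = f v w.
Proof.
rewrite tsum_phiF.
transitivity (\sum_(p <- rhoV v) \sum_(q <- rhoV p.1)
    (fun x a b => f x (actW (S a * b) w)) q.1 q.2 p.2).
  by apply: eq_bigr => q _; rewrite tsum_phiG; apply: eq_bigr => r _ /=;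
     rewrite (actW_mul hW).
have tg : trilin (fun x a b => f x (actW (S a * b) w)).
  apply: trilinP => *; first exact: bilin_l.
    exact: lin1_comp S_l (lin1_comp (mull_lin _) (lin1_comp (actW_l w) (bilin_r _ bf))).
  exact: lin1_comp (mulr_lin _) (lin1_comp (actW_l w) (bilin_r _ bf)).
rewrite (coassV v tg).
transitivity (\sum_(p <- rhoV v) eps p.2 *: f p.1 w).
  apply: eq_bigr => p _ /=.
  rewrite -(bilin_sumr bf) -actW_suml (S_antipode_l hA) actWZl (actW_one hW).
  by rewrite (bilinZr bf).
rewrite -[in RHS](rhoV_counit hV v) (bilin_suml bf).
by apply: eq_bigr => p _; rewrite (bilinZl bf).
Qed.

Lemma FG_pt (X : lmodType K) (f : V -> W -> X) (bf : bilin f) v w :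
  tsum (fun u v => tsum f (phiF u v)) (phiG v w) = f v w.
Proof.
rewrite tsum_phiG.
transitivity (\sum_(p <- rhoV v) \sum_(q <- rhoV p.1)
    (fun x a b => f x (actW (a * S b) w)) q.1 q.2 p.2).
  by apply: eq_bigr => q _; rewrite tsum_phiF; apply: eq_bigr => r _ /=;
     rewrite (actW_mul hW).
have tg : trilin (fun x a b => f x (actW (a * S b) w)).
  apply: trilinP => *; first exact: bilin_l.
    exact: lin1_comp (mull_lin _) (lin1_comp (actW_l w) (bilin_r _ bf)).
  exact: lin1_comp S_l (lin1_comp (mulr_lin _) (lin1_comp (actW_l w) (bilin_r _ bf))).
rewrite (coassV v tg).
transitivity (\sum_(p <- rhoV v) eps p.2 *: f p.1 w).
  apply: eq_bigr => p _ /=.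
  rewrite -(bilin_sumr bf) -actW_suml (S_antipode_r hA) actWZl (actW_one hW).
  by rewrite (bilinZr bf).
rewrite -[in RHS](rhoV_counit hV v) (bilin_suml bf).
by apply: eq_bigr => p _; rewrite (bilinZl bf).
Qed.

Lemma mod_compat b sb : B b -> (forall p, p \in sb -> B p.1) -> teq2 (Delta b) sb ->
  forall x, teq2 (Mk phiF (indV_act actV b x)) (indW_act actV actW sb (Mk phiF x)).
Proof.
move=> Bb Bsb Dsb x X f bf.
rewrite -!/(tsum _ _).
have -> : tsum f (indW_act actV actW sb (Mk phiF x)) =
  tsum (fun u v => \sum_(q <- sb) f (actV q.1 u) (actW q.2 v)) (Mk phiF x).
  by rewrite /tsum /indW_act big_allpairs_dep.
rewrite !tsum_Mk /tsum /indV_act big_map; apply: eq_bigr => p _ /=.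
rewrite /phiF !big_map /=.
have bg : bilin (fun x a => f x (actW a p.2)).
  apply: bilinP => [a|y]; first exact: bilin_l.
  exact: lin1_comp (actW_l _) (bilin_r _ bf).
have := rhoV_compat hV Bb Bsb Dsb p.1 bg; rewrite big_allpairs_dep /= => ->.
rewrite exchange_big /=; apply: eq_bigr => r _; apply: eq_bigr => q _.
by rewrite (actW_mul hW).
Qed.

Lemma sum_F1 (X : lmodType K) (g : V -> W -> C -> X) v w c :
  \sum_(i <- Mk phiF [:: (v, w)]) g i.1 i.2 c = \sum_(u <- rhoV v) g u.1 (actW u.2 w) c.
Proof. by rewrite /Mk big_allpairs_dep big_seq1 big_map. Qed.

Lemma comod_compat x :
  teq3 (tmap_idC (Mk phiF) (indV_coact rhoV rhoW actC x)) (indW_coact rhoW (Mk phiF x)).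
Proof.
move=> X g tg.
have -> : \sum_(p <- indW_coact rhoW (Mk phiF x)) g p.1.1 p.1.2 p.2 =
  tsum (fun u v => \sum_(r <- rhoW v) g u r.1 r.2) (Mk phiF x).
  by rewrite /tsum /indW_coact big_allpairs_dep.
rewrite tsum_Mk /tmap_idC big_allpairs_dep /indV_coact big_flatten big_map /tsum.
apply: eq_bigr => p _ /=; rewrite big_allpairs_dep /=.
under eq_bigr => q _ do under eq_bigr => r _ do rewrite sum_F1.
rewrite /phiF big_map /=.
transitivity (\sum_(r <- rhoW p.2) \sum_(q <- rhoV p.1) \sum_(s <- Delta q.2)
   (fun x a b => g x (actW a r.1) (actC b r.2)) q.1 s.1 s.2).
  rewrite exchange_big; apply: eq_bigr => r _.
  have tr : trilin (fun x a b => g x (actW a r.1) (actC b r.2)).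
    apply: trilinP => *; first exact: tril1.
      exact: lin1_comp (actW_l _) (tril2 tg _ _).
    exact: lin1_comp (actC_l _) (tril3 tg _ _).
  exact: (coassV p.1 tr).
rewrite exchange_big; apply: eq_bigr => q _ /=.
have bq : bilin (g q.1).
  by apply: bilinP => [a|a]; [exact: tril2 | exact: tril3].
have := rhoW_compat hW q.2 p.2 bq; rewrite big_allpairs_dep /= => ->.
by rewrite exchange_big.
Qed.

Lemma main_gen : Ind_isomorphic Delta B actC actV rhoV actW rhoW.
Proof.
exists (Mk phiF), (Mk phiG); split.
- by apply: tl_Mk => X f bf; exact: bilin_phiF.
- by apply: tl_Mk => X f bf; exact: bilin_phiG.
- split=> x X f bf; rewrite -!/(tsum _ _) !tsum_Mk; apply: eq_bigr => p _.
    exact: GF_pt.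
  exact: FG_pt.
- exact: mod_compat.
- exact: comod_compat.
Qed.
End Main.
Unset Implicit Arguments.
Set Strict Implicit.

Theorem mainTheorem6 (R : realType) (A : algType R[i])
    (Delta : A -> seq (A * A)) (eps : A -> R[i]) (S st : A -> A) (Phi : A -> R[i])
    (hA : is_CQG_Hopf_star Delta eps S st Phi)
    (B : A -> Prop) (hB : is_right_coideal_star_subalg Delta st B)
    (C : lmodType R[i]) (piC : A -> C) (DeltaC : C -> seq (C * C))
    (epsC : C -> R[i]) (actC : A -> C -> C)
    (hC : is_quotient_coalg Delta eps B piC DeltaC epsC actC)
    (V : lmodType R[i]) (actV : A -> V -> V) (rhoV : V -> seq (V * A))
    (hV : is_BModA Delta eps B actV rhoV)
    (W : lmodType R[i]) (actW : A -> W -> W) (rhoW : W -> seq (W * C))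
    (hW : is_AModC Delta DeltaC epsC actC actW rhoW) :
  Ind_isomorphic Delta B actC actV rhoV actW rhoW.
Proof. exact: (main_gen hA hC hV hW). Qed.
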